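(* Let $n>2$, $V=\mathbb{F}_2^n$, let $g\in\mathrm{Sym}(V)$ and let $\Sigma$ be a Sylow $2$-subgroup of $\mathrm{AGL}(V)$ containing $T^g$. Then $T^g\trianglelefteq\Sigma$ if and only if $T^g\in\{T,T_\Sigma\}$.
   Context: $T=\{\sigma_v:v\in V\}$ with $\sigma_v:x\mapsto x+v$; $\mathrm{AGL}(V)$ is the affine group of $V$. For a Sylow $2$-subgroup $\Sigma$ of $\mathrm{AGL}(V)$, $T_\Sigma$ denotes the unique elementary abelian regular subgroup of $\mathrm{Sym}(V)$ that is contained in and normal in $\Sigma$ and satisfies $|T\cap T_\Sigma|=2^{n-2}$ (its existence and uniqueness is a theorem of the paper). *)

(* Defs.v *)
From HB Require Import structures.
From mathcomp Require Import all_boot all_order all_algebra all_fingroup all_solvable.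
Set Implicit Arguments. Unset Strict Implicit. Unset Printing Implicit Defensive.
Import GRing.Theory.
Local Open Scope group_scope.

Definition V (n : nat) : finType := 'rV['F_2]_n.

Definition transl (n : nat) (v : V n) : {perm V n} := perm (@addrI _ v).

Definition T (n : nat) : {set {perm V n}} := [set transl v | v : V n].

Definition AGL (n : nat) : {set {perm V n}} :=
  [set p : {perm V n} | [exists A : 'M['F_2]_n, [exists b : V n,
      (A \in unitmx) && [forall x : V n, p x == (x *m A + b)%R]]]].

Definition regular_subgroup (n : nat) (X : {set {perm V n}}) : bool :=
  group_set X && [transitive X, on [set: V n] | 'P]
  && [forall x : V n, 'C_X[x | 'P] == 1].

Definition isTSigma (n : nat) (Sigma X : {set {perm V n}}) : bool :=
  [&& regular_subgroup X, 2.-abelem X, X <| Sigma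
    & #|T n :&: X| == 2 ^ (n - 2)]%N.

(* T_Sigma: the (by the paper, unique) such subgroup *)
Definition T_Sigma (n : nat) (Sigma : {set {perm V n}}) : {set {perm V n}} :=
  odflt set0 [pick X : {set {perm V n}} | isTSigma Sigma X].

(* Main.v *)
Require Import Defs.
From mathcomp Require Import all_boot all_order all_algebra all_fingroup all_solvable.
From mathcomp Require Import zify.

Module PartA.
Set Implicit Arguments. Unset Strict Implicit. Unset Printing Implicit Defensive.
Import GRing.Theory.
Local Open Scope group_scope.

Section Basics.
Variable n : nat.
Local Notation R := 'rV['F_2]_n.
Local Notation P := {perm V n}.
Definition ap (p : P) (x : R) : R := p x.

Lemma apM (p q : P) x : ap (p * q) x = ap q (ap p x).
Proof. by rewrite /ap permM. Qed.
Lemma ap1 x : ap 1 x = x.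
Proof. by rewrite /ap perm1. Qed.
Lemma apK (p : P) x : ap (p^-1) (ap p x) = x.
Proof. by rewrite /ap permK. Qed.
Lemma apKV (p : P) x : ap p (ap (p^-1) x) = x.
Proof. by rewrite /ap permKV. Qed.
Lemma ap_inj (p : P) : injective (ap p).
Proof. exact: perm_inj. Qed.
Lemma perm_ext (p q : P) : (forall x, ap p x = ap q x) -> p = q.
Proof. by move=> H; apply/permP => x; apply: H. Qed.

Lemma F2_cases (a : 'F_2) : a = 0%R \/ a = 1%R.
Proof. case: a => [[|[|m]]] H. left; exact: val_inj. right; exact: val_inj. done. Qed.
Lemma F2xx (a : 'F_2) : (a + a = 0)%R.
Proof. case: (F2_cases a) => ->; [exact: addr0 | exact: val_inj]. Qed.
Lemma entryD (a b : R) i j : (a + b)%R i j = (a i j + b i j)%R.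
Proof. by rewrite mxE. Qed.
Lemma entry0 i j : (0 : R)%R i j = 0%R.
Proof. by rewrite mxE. Qed.
Ltac f2 := let i := fresh "i" in apply/rowP => i; rewrite ?entryD ?entry0;
  repeat (match goal with |- context [fun_of_matrix ?t ?k i] =>
     case: (F2_cases (fun_of_matrix t k i)) => -> end);
  apply: val_inj; reflexivity.

Lemma addxx (x : R) : (x + x = 0)%R.
Proof. by apply/rowP => i; rewrite !mxE F2xx. Qed.
Lemma addKx (x y : R) : (x + (x + y) = y)%R.
Proof. by rewrite addrA addxx add0r. Qed.
Lemma addxK (x y : R) : (y + x + x = y)%R.
Proof. by rewrite -addrA addxx addr0. Qed.

Lemma ap_transl v x : ap (transl v) x = (v + x)%R.
Proof. by rewrite /ap /transl permE. Qed.

Lemma transl0 : transl (0%R : R) = 1.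
Proof. by apply: perm_ext => x; rewrite ap_transl ap1 add0r. Qed.
Lemma translD (v w : R) : transl (v + w)%R = transl v * transl w.
Proof. by apply: perm_ext => x; rewrite apM !ap_transl addrCA addrA. Qed.
Lemma transl_inj : injective (@transl n).
Proof. by move=> v w H; have := ap_transl v 0; rewrite H ap_transl !addr0. Qed.
Lemma translV (v : R) : (transl v)^-1 = transl v.
Proof. by apply: (mulgI (transl v)); rewrite mulgV -translD addxx transl0. Qed.

Definition affine (p : P) := forall x y : R, ap p (x + y)%R = (ap p x + ap p y + ap p 0)%R.

Lemma additive_mx (L : R -> R) : (forall x y, L (x + y)%R = (L x + L y)%R) ->
  exists A : 'M['F_2]_n, forall x, L x = (x *m A)%R.
Proof.
move=> LD.
have L0 : L 0%R = 0%R by apply: (addrI (L 0%R)); rewrite -LD !addr0.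
have Lsc (a : 'F_2) x : L (a *: x)%R = (a *: L x)%R.
  by case: (F2_cases a) => ->; rewrite ?scale0r ?scale1r.
pose A := (\matrix_(i < n) L (delta_mx ord0 i) : 'M['F_2]_n)%R.
exists A => x.
rewrite mulmx_sum_row.
have dec : x = (\sum_i x ord0 i *: delta_mx ord0 i)%R.
  apply/rowP => j; rewrite summxE (bigD1 j) //= big1 ?addr0.
    by rewrite !mxE !eqxx mulr1.
  by move=> i ij; rewrite !mxE eqxx /= eq_sym (negbTE ij) mulr0.
transitivity (\sum_i x ord0 i *: L (delta_mx ord0 i))%R; last first.
  by apply: eq_bigr => i _; rewrite rowK.
rewrite {1}dec; elim/big_rec2: _ => [|i y1 y2 _ IH]; first by rewrite ?L0.
by rewrite LD Lsc IH.
Qed.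

Lemma additive_AGL (p : P) : (forall x y, ap p (x + y)%R = (ap p x + ap p y)%R) -> p \in AGL n.
Proof.
move=> pD.
have [A HA] := additive_mx pD.
have qD x y : ap p^-1 (x + y)%R = (ap p^-1 x + ap p^-1 y)%R.
  by apply: (@ap_inj p); rewrite pD !apKV.
have [B HB] := additive_mx qD.
rewrite inE; apply/existsP; exists A; apply/existsP; exists 0%R.
apply/andP; split; last by apply/forallP => x; rewrite addr0 -HA.
have AB : (A *m B)%R = 1%:M%R.
  apply/row_matrixP => i; rewrite !rowE mulmxA -HA -HB apK.
  by rewrite mulmx1.
by case: (mulmx1_unit AB).
Qed.

Lemma affine_AGL p : p \in AGL n <-> affine p.
Proof.
split.
  rewrite inE => /existsP [A /existsP [b /andP [_ /forallP H]]] x y.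
  have E z : ap p z = (z *m A + b)%R by apply/eqP; apply: H.
  by rewrite !E mulmxDl mul0mx add0r; f2.
move=> Ha.
set L := fun x => (ap p x + ap p 0)%R.
have LD x y : L (x + y)%R = (L x + L y)%R.
  rewrite /L Ha; f2.
have [A HA] := additive_mx LD.
have Linj : injective L by move=> x y; rewrite /L => /addIr /ap_inj.
pose Li y := ap p^-1 (y + ap p 0)%R.
have LLi y : L (Li y) = y by rewrite /L /Li apKV addxK.
have LiD x y : Li (x + y)%R = (Li x + Li y)%R.
  by apply: Linj; rewrite LD !LLi.
have [B HB] := additive_mx LiD.
rewrite inE; apply/existsP; exists A; apply/existsP; exists (ap p 0).
apply/andP; split; last first.
  by apply/forallP => x; rewrite -HA /L addxK.
have AB : (B *m A)%R = 1%:M%R.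
  apply/row_matrixP => i; rewrite !rowE mulmxA -HA -HB LLi.
  by rewrite mulmx1.
by case: (mulmx1_unit AB).
Qed.
End Basics.

End PartA.
Import PartA.

Module PartB.
Set Implicit Arguments. Unset Strict Implicit. Unset Printing Implicit Defensive.
Import GRing.Theory.
Local Open Scope ring_scope.

Ltac f2 := let i := fresh "i" in apply/rowP => i; rewrite ?entryD ?entry0;
  repeat (match goal with |- context [fun_of_matrix ?t ?k i] =>
     case: (F2_cases (fun_of_matrix t k i)) => -> end);
  apply: val_inj; reflexivity.

Section AGLgroup.
Variable n : nat.
Local Notation R := 'rV['F_2]_n.
Local Notation P := {perm V n}.

Lemma affine1 : affine (1%g : P).
Proof. by move=> x y; rewrite !ap1; f2. Qed.

Lemma affineM (p q : P) : affine p -> affine q -> affine (p * q)%g.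
Proof.
move=> hp hq x y; rewrite !apM hp hq hq.
by f2.
Qed.

Lemma group_set_AGL : group_set (AGL n).
Proof.
apply/group_setP; split; first by apply/affine_AGL; apply: affine1.
by move=> p q /affine_AGL hp /affine_AGL hq; apply/affine_AGL; apply: affineM.
Qed.
Canonical AGL_group := group group_set_AGL.

Lemma affine_transl (v : R) : affine (transl v).
Proof. by move=> x y; rewrite !ap_transl; f2. Qed.

Lemma group_set_T : group_set (T n).
Proof.
apply/group_setP; split; first by apply/imsetP; exists 0; rewrite ?transl0.
move=> p q /imsetP [v _ ->] /imsetP [w _ ->]; apply/imsetP; exists (v + w) => //.
by rewrite translD.
Qed.
Canonical T_group := group group_set_T.

Lemma T_AGL : T n \subset AGL n.
Proof. by apply/subsetP => p /imsetP [v _ ->]; apply/affine_AGL; apply: affine_transl. Qed.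

Lemma affine_conj_transl (p : P) v : affine p ->
  (p^-1 * transl v * p)%g = transl (ap p v + ap p 0).
Proof.
move=> hp; apply: perm_ext => x; rewrite !apM ap_transl.
have -> : v + ap p^-1 x = ap p^-1 x + v by rewrite addrC.
by rewrite hp apKV ap_transl; f2.
Qed.

Lemma AGL_norm_T : AGL n \subset 'N(T n)%g.
Proof.
apply/subsetP => p /affine_AGL hp; rewrite inE; apply/subsetP => q /imsetP [r /imsetP [v _ ->] ->].
by rewrite /conjg mulgA affine_conj_transl //; apply/imsetP; exists (ap p v + ap p 0).
Qed.

Lemma card_T : #|T n| = (2 ^ n)%N.
Proof.
rewrite card_imset; last exact: transl_inj.
by rewrite card_mx card_Fp // mul1n.
Qed.

Lemma pgroup_T : (2.-group (T n))%g.
Proof. by rewrite /pgroup card_T pnatX pnat_id. Qed.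

End AGLgroup.

Section Sigma.
Variable n : nat.
Local Notation R := 'rV['F_2]_n.
Local Notation P := {perm V n}.
Variable Sigma : {group P}.
Hypothesis SylS : (2.-Hall(AGL n) Sigma)%g.

Lemma S_AGL : Sigma \subset AGL n.
Proof. exact: pHall_sub SylS. Qed.

Lemma T_S : T n \subset Sigma.
Proof.
apply: (normal_sub_max_pgroup (Hall_max SylS) (pgroup_T n)).
by rewrite /normal T_AGL AGL_norm_T.
Qed.

Lemma S_affine p : p \in Sigma -> affine p.
Proof. by move=> pS; apply/affine_AGL; apply: (subsetP S_AGL). Qed.

Lemma transl_S v : transl v \in Sigma.
Proof. by apply: (subsetP T_S); apply/imsetP; exists v. Qed.

Definition linp (p : P) : P := (p * transl (ap p 0))%g.
Lemma ap_linp p x : ap (linp p) x = ap p 0 + ap p x.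
Proof. by rewrite /linp apM ap_transl. Qed.
Lemma linp_S p : p \in Sigma -> linp p \in Sigma.
Proof. by move=> pS; rewrite groupM ?transl_S. Qed.
Lemma linp0 p : ap (linp p) 0 = 0.
Proof. by rewrite ap_linp addxx. Qed.

Lemma S_additive u : u \in Sigma -> ap u 0 = 0 -> forall x y, ap u (x + y) = ap u x + ap u y.
Proof. by move=> uS u0 x y; rewrite (S_affine uS) u0 addr0. Qed.

Definition invar (D : {set R}) := forall u, u \in Sigma -> ap u 0 = 0 ->
  forall d, d \in D -> ap u d \in D.

Definition epsp (p : P) (x : R) : R := ap p x + ap p 0 + x.

Lemma epspE p x : ap p x = epsp p x + ap p 0 + x.
Proof. by rewrite /epsp; f2. Qed.

Section KE.
Variable D : {group R}.
Hypothesis invD : invar D.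

Definition Kset : {set P} := [set p : P | [forall x, forall y, epsp p (x + y) == epsp p x + epsp p y]
   && [forall x, epsp p x \in D] && [forall d in D, epsp p d == 0]].

Lemma KsetP p : reflect [/\ forall x y, epsp p (x + y) = epsp p x + epsp p y,
   forall x, epsp p x \in D & forall d, d \in D -> epsp p d = 0] (p \in Kset).
Proof.
rewrite inE; apply: (iffP idP).
  case/andP => [/andP [/forallP H1 /forallP H2] /forallP H3]; split.
  - by move=> x y; apply/eqP; move/forallP: (H1 x); apply.
  - exact: H2.
  - by move=> d dD; apply/eqP; move: (H3 d); rewrite dD.
case=> H1 H2 H3; apply/andP; split; first (apply/andP; split).
- by apply/forallP => x; apply/forallP => y; rewrite H1.
- by apply/forallP.
- by apply/forallP => d; apply/implyP => dD; rewrite H3.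
Qed.

Lemma eps0 p : p \in Kset -> epsp p 0 = 0.
Proof. by case/KsetP => H _ _; apply: (addrI (epsp p 0)); rewrite -H !addr0. Qed.

Lemma group_set_K : group_set Kset.
Proof.
apply/group_setP; split.
  apply/KsetP; split.
  - by move=> x y; rewrite /epsp !ap1; f2.
  - by move=> x; rewrite /epsp !ap1 addr0 addxx group1.
  - by move=> d _; rewrite /epsp !ap1 addr0 addxx.
move=> p q pK qK.
have [pD pin pk] := elimT (KsetP p) pK; have [qD qin qk] := elimT (KsetP q) qK.
have E x : epsp (p * q)%g x = epsp p x + epsp q x.
  rewrite {1}/epsp !apM (epspE q (ap p x)) (epspE q (ap p 0)) (epspE p x).
  rewrite (qD (epsp p x + ap p 0) x) (qD (epsp p x) (ap p 0)) (qk _ (pin x)); f2.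
apply/KsetP; split.
- by move=> x y; rewrite !E pD qD; f2.
- by move=> x; rewrite E groupM.
- by move=> d dD; rewrite E pk ?qk ?addr0.
Qed.
Canonical K_group := group group_set_K.

Lemma K_affine p : p \in Kset -> affine p.
Proof.
case/KsetP => pD _ _ x y.
by rewrite (epspE p (x + y)) (epspE p x) (epspE p y) pD; f2.
Qed.

Lemma K_AGL : Kset \subset AGL n.
Proof. by apply/subsetP => p /K_affine /affine_AGL. Qed.

Lemma K_exp p : p \in Kset -> (p ^+ 4)%g = 1%g.
Proof.
move=> pK; have [pD pin pk] := elimT (KsetP p) pK.
have E2 x : ap (p ^+ 2)%g x = epsp p (ap p 0) + x.
  rewrite expgS expg1 apM (epspE p (ap p x)) (epspE p x).
  rewrite (pD (epsp p x + ap p 0) x) (pD (epsp p x) (ap p 0)) (pk _ (pin x)); f2.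
apply: perm_ext => x.
rewrite (_ : 4 = 2 * 2)%N // expgM expgS expg1 apM !E2 ap1; f2.
Qed.

Lemma pgroup_K : (2.-group Kset)%g.
Proof.
rewrite -[Kset]/(gval K_group) -pnat_exponent.
apply: (@pnat_dvd _ 4); last by [].
by apply/exponentP => p; apply: K_exp.
Qed.

Lemma ap_inv_affine (s : P) : affine s -> forall x,
  ap s (ap s^-1 x + ap s^-1 0) = x + ap s 0.
Proof. by move=> hs x; rewrite hs !apKV addr0. Qed.

Lemma S_norm_K : Sigma \subset 'N(Kset)%g.
Proof.
apply/subsetP => s sS; rewrite inE; apply/subsetP => yy /imsetP [k kK ->].
have hs := S_affine sS.
have [kD kin kk] := elimT (KsetP k) kK.
have sVS : s^-1%g \in Sigma by rewrite groupV.
pose L := ap (linp s); pose L' := ap (linp s^-1).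
have LD x y : L (x + y) = L x + L y.
  by rewrite /L; apply: S_additive; rewrite ?linp_S ?linp0.
have L'D x y : L' (x + y) = L' x + L' y.
  by rewrite /L'; apply: S_additive; rewrite ?linp_S ?linp0.
have LL' x : L (L' x) = x.
  rewrite /L /L' !ap_linp.
  have -> : ap s^-1 0 + ap s^-1 x = ap s^-1 x + ap s^-1 0 by rewrite addrC.
  by rewrite ap_inv_affine //; f2.
have E x : epsp (k ^ s)%g x = L (epsp k (L' x)).
  rewrite /conjg {1}/epsp !apM.
  rewrite (epspE k (ap s^-1 x)) (epspE k (ap s^-1 0)).
  rewrite (hs (epsp k (ap s^-1 x) + ap k 0) (ap s^-1 x)).
  rewrite (hs (epsp k (ap s^-1 x)) (ap k 0)).
  rewrite (hs (epsp k (ap s^-1 0) + ap k 0) (ap s^-1 0)).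
  rewrite (hs (epsp k (ap s^-1 0)) (ap k 0)) !apKV.
  have -> : L' x = ap s^-1 x + ap s^-1 0 by rewrite /L' ap_linp addrC.
  rewrite kD /L ap_linp (hs (epsp k (ap s^-1 x))); f2.
apply/KsetP; split.
- by move=> x1 x2; rewrite !E L'D kD LD.
- move=> x; rewrite E /L; apply: invD; rewrite ?linp_S ?linp0 //.
- move=> d dD; rewrite E kk ?addr0.
    by rewrite /L ap_linp addxx.
  by rewrite /L'; apply: invD; rewrite ?linp_S ?linp0.
Qed.

Lemma K_S : Kset \subset Sigma.
Proof.
have nSK := S_norm_K.
have H : (Sigma <*> K_group)%G :=: Sigma.
  apply: (sub_pHall SylS).
  - by rewrite /= norm_joinEl // pgroupM (pHall_pgroup SylS) pgroup_K.
  - exact: joing_subl.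
  - by rewrite join_subG S_AGL K_AGL.
by rewrite -H joing_subr.
Qed.

Lemma KE (eps : R -> R) : (forall x y, eps (x + y) = eps x + eps y) ->
  (forall x, eps x \in D) -> (forall d, d \in D -> eps d = 0) ->
  exists2 u, u \in Sigma & forall x, ap u x = x + eps x.
Proof.
move=> eD ein ek.
have e0 : eps 0 = 0 by apply: (addrI (eps 0)); rewrite -eD !addr0.
have inj : injective (fun x => x + eps x).
  move=> x y /= Hxy.
  have := congr1 eps Hxy; rewrite !eD (ek _ (ein x)) (ek _ (ein y)) !addr0 => exy.
  by move: Hxy; rewrite exy => /addIr.
exists (perm inj : P).
  apply: (subsetP K_S); apply/KsetP.
  have ape x : ap (perm inj : P) x = x + eps x by rewrite /ap permE.
  have epe x : epsp (perm inj : P) x = eps x by rewrite /epsp !ape e0 addr0; f2.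
  split.
  - by move=> x y; rewrite !epe eD.
  - by move=> x; rewrite epe.
  - by move=> d dD; rewrite epe ek.
by move=> x; rewrite /ap permE.
Qed.

End KE.
End Sigma.

End PartB.
Import PartB.

Module PartC.
Set Implicit Arguments. Unset Strict Implicit. Unset Printing Implicit Defensive.
Import GRing.Theory.
Local Open Scope ring_scope.

Ltac f2 := let i := fresh "i" in apply/rowP => i; rewrite ?entryD ?entry0;
  repeat (match goal with |- context [fun_of_matrix ?t ?k i] =>
     case: (F2_cases (fun_of_matrix t k i)) => -> end);
  apply: val_inj; reflexivity.

Section FL.
Variable n : nat.
Local Notation R := 'rV['F_2]_n.

Lemma FL (D : {group R}) (x : R) : x \notin D ->
  exists lam : R -> 'F_2, [/\ forall a b, lam (a + b) = lam a + lam b,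
     forall d, d \in D -> lam d = 0 & lam x = 1].
Proof.
move=> xD.
pose M := (\matrix_(i < #|D|) (enum_val i : R)) : 'M['F_2]_(#|D|, n).
have subM v : (v <= M)%MS -> v \in D.
  case/submxP => u ->; rewrite mulmx_sum_row.
  apply: (big_ind (fun w : R => w \in D)).
  - exact: (group1 D).
  - by move=> a b; apply: (@groupM _ D).
  move=> i _; rewrite rowK.
  case: (F2_cases (u ord0 i)) => ->; first by rewrite scale0r; exact: (group1 D).
  by rewrite scale1r; apply: enum_valP.
have Msub d : d \in D -> (d <= M)%MS.
  move=> dD; have := row_sub (enum_rank_in dD d) M.
  by rewrite rowK enum_rankK_in.
have : x *m cokermx M != 0.
  by rewrite -submxE; apply/negP => /subM; apply/negP.
move=> H; have /existsP [j Hj] : [exists j, (x *m cokermx M) ord0 j != 0].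
  apply: contraR H => /existsPn Hn; apply/eqP/rowP => j; rewrite entry0.
  by apply/eqP; move: (Hn j); rewrite negbK.
exists (fun v => (v *m cokermx M) ord0 j); split.
- by move=> a b; rewrite mulmxDl entryD.
- by move=> d /Msub; rewrite submxE => /eqP ->; rewrite entry0.
- by case: (F2_cases ((x *m cokermx M) ord0 j)) Hj => -> // /eqP.
Qed.
End FL.

Section Ext.
Variable n : nat.
Local Notation R := 'rV['F_2]_n.

Definition ext (H : {set R}) (a : R) : {set R} := [set x | (x \in H) || (x + a \in H)].

Lemma group_set_ext (H : {group R}) a : group_set (ext H a).
Proof.
apply/group_setP; split; first by rewrite inE; apply/orP; left; exact: (group1 H).
move=> x y; rewrite !inE => /orP [xH|xH] /orP [yH|yH]; apply/orP.
- by left; exact: (@groupM _ H x y xH yH).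
- right; have := (@groupM _ H _ _ xH yH).
  by have -> : (x * (y + a))%g = (x * y)%g + a by rewrite /=; f2.
- right; have := (@groupM _ H _ _ xH yH).
  by have -> : ((x + a) * y)%g = (x * y)%g + a by change (x * y)%g with (x + y); f2.
- left; have := (@groupM _ H _ _ xH yH).
  by have -> : ((x + a) * (y + a))%g = (x * y)%g by change (x * y)%g with (x + y); f2.
Qed.
Canonical ext_group (H : {group R}) a := group (group_set_ext H a).

Lemma ext_sub (H : {set R}) a : H \subset ext H a.
Proof. by apply/subsetP => x xH; rewrite inE xH. Qed.

Lemma ext_a (H : {group R}) a : a \in ext H a.
Proof. by rewrite inE addxx; apply/orP; right; exact: (group1 H). Qed.

Lemma card_ext (H : {group R}) a : a \notin H -> #|ext H a| = (2 * #|H|)%N.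
Proof.
move=> aH.
have -> : ext H a = H :|: [set x + a | x in H].
  apply/setP => x; rewrite !inE; congr (_ || _).
  apply/idP/imsetP => [xa|[y yH ->]]; first by exists (x + a) => //; rewrite addxK.
  by rewrite addxK.
rewrite cardsU card_imset; last by move=> x y /addIr.
have -> : H :&: [set x + a | x in H] = set0.
  apply/setP => x; rewrite !inE; apply/negP => /andP [xH /imsetP [y yH exy]].
  move/negP: aH; apply; have := (@groupM _ H _ _ xH yH).
  by have -> : (x * y)%g = a by change (x * y)%g with (x + y); rewrite exy; f2.
by rewrite cards0 subn0 mul2n addnn.
Qed.

End Ext.

End PartC.
Import PartC.

Module PartD.
Set Implicit Arguments. Unset Strict Implicit. Unset Printing Implicit Defensive.
Import GRing.Theory.
Local Open Scope ring_scope.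

Ltac f2 := let i := fresh "i" in apply/rowP => i; rewrite ?entryD ?entry0;
  repeat (match goal with |- context [fun_of_matrix ?t ?k i] =>
     case: (F2_cases (fun_of_matrix t k i)) => -> end);
  apply: val_inj; reflexivity.

Section NA.
Variable n : nat.
Local Notation R := 'rV['F_2]_n.
Local Notation P := {perm V n}.
Variable Sigma : {group P}.
Hypothesis SylS : (2.-Hall(AGL n) Sigma)%g.

Definition goodN (N : {set P}) := [/\ N \subset Sigma, Sigma \subset 'N(N)%g, abelian N,
  forall v, v \in N -> (v * v = 1)%g &
  (forall b, exists2 v, v \in N & ap v 0 = b) /\
  (forall v v', v \in N -> v' \in N -> ap v 0 = ap v' 0 -> v = v')].

Definition Wset (N : {set P}) : {set R} := [set w | transl w \in N].
Definition nu (N : {set P}) (b : R) : P := odflt 1%g [pick v in N | ap v 0 == b].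
Definition alpha (N : {set P}) (b x : R) : R := ap (nu N b) x + x + b.

Variable N : {group P}.
Hypothesis gN : goodN N.

Lemma group_set_W : group_set (Wset N).
Proof.
apply/group_setP; split; first by rewrite inE transl0.
by move=> x y; rewrite !inE => xN yN; rewrite -[(x * y)%g]/(x + y) translD groupM.
Qed.
Canonical W_group := group group_set_W.

Lemma nuP b : nu N b \in N /\ ap (nu N b) 0 = b.
Proof.
rewrite /nu; case: pickP => [v /andP [vN /eqP vb]|H] //=.
case: gN => _ _ _ _ [reg _]; case: (reg b) => v vN vb.
by move: (H v); rewrite vN vb eqxx.
Qed.

Lemma nuN b : nu N b \in N. Proof. by case: (nuP b). Qed.
Lemma nu0 b : ap (nu N b) 0 = b. Proof. by case: (nuP b). Qed.

Lemma nu_eq v : v \in N -> v = nu N (ap v 0).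
Proof. by case: gN => _ _ _ _ [_ uq] vN; apply: uq; rewrite ?nuN ?nu0. Qed.

Lemma NS v : v \in N -> v \in Sigma.
Proof. by case: gN => H _ _ _ _; apply: (subsetP H). Qed.

Lemma nuE b x : ap (nu N b) x = alpha N b x + x + b.
Proof. by rewrite /alpha; f2. Qed.

Lemma alphaD b x y : alpha N b (x + y) = alpha N b x + alpha N b y.
Proof. have hA := S_affine SylS (NS (nuN b)). rewrite /alpha (hA x y) nu0; f2. Qed.

Lemma alpha0 b : alpha N b 0 = 0.
Proof. by apply: (addrI (alpha N b 0)); rewrite -alphaD !addr0. Qed.

Lemma alpha_W b w : w \in Wset N -> alpha N b w = 0.
Proof.
rewrite inE => wN.
case: gN => _ _ ab _ _.
have : commute (transl w) (nu N b) by apply: (centsP ab); rewrite ?nuN.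
move/(congr1 (fun p => ap p 0)); rewrite !apM ap_transl addr0 nu0 ap_transl.
by rewrite /alpha => ->; f2.
Qed.

Lemma alpha_in b v : alpha N b v \in Wset N.
Proof.
rewrite inE.
case: gN => _ nN _ _ _.
have : (nu N b ^ transl v)%g \in N.
  by rewrite memJ_norm ?nuN // (subsetP nN) ?transl_S.
have -> : (nu N b ^ transl v)%g = (nu N b * transl (alpha N b v))%g.
  apply: perm_ext => x; rewrite /conjg !apM translV !ap_transl.
  rewrite (S_affine SylS (NS (nuN b)) v x) nu0 /alpha; f2.
by move=> H; rewrite -(mulKg (nu N b) (transl _)) groupM ?groupV ?nuN.
Qed.


Lemma nu_shift b w : w \in Wset N -> nu N (b + w) = (nu N b * transl w)%g.
Proof.
rewrite inE => wN; symmetry; rewrite (nu_eq (groupM (nuN b) wN)).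
by rewrite apM nu0 ap_transl addrC.
Qed.

Lemma alpha_shift b w x : w \in Wset N -> alpha N (b + w) x = alpha N b x.
Proof. by move=> wW; rewrite /alpha nu_shift // apM ap_transl; f2. Qed.

Lemma nu_mul b c : (nu N b * nu N c)%g = nu N (alpha N c b + b + c).
Proof. by rewrite (nu_eq (groupM (nuN b) (nuN c))) apM nu0 nuE. Qed.

Lemma alpha_add b c x : alpha N (b + c) x = alpha N b x + alpha N c x.
Proof.
have wW := alpha_in c b.
have -> : b + c = (alpha N c b + b + c) + alpha N c b by f2.
rewrite alpha_shift //.
have := congr1 (fun p => ap p x) (nu_mul b c); rewrite apM => /= E.
rewrite {1}/alpha -E (nuE c) (nuE b x) (alphaD c (alpha N b x + x) b) (alphaD c (alpha N b x) x) (alpha_W c (alpha_in b x)); f2.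
Qed.

Lemma alpha_sym b c : alpha N c b = alpha N b c.
Proof.
case: gN => _ _ ab _ _.
have : commute (nu N b) (nu N c) by apply: (centsP ab); rewrite ?nuN.
move/(congr1 (fun p => ap p 0)); rewrite !apM !nu0 !nuE => E.
by apply: (addIr (b + c)); move: E; rewrite !addrA => ->; f2.
Qed.

Lemma alpha_alt b : alpha N b b = 0.
Proof.
case: gN => _ _ _ inv2 _.
have := congr1 (fun p => ap p 0) (inv2 _ (nuN b)).
by rewrite apM !nu0 ap1 nuE => E; apply: (addIr (b + b)); rewrite addrA E; f2.
Qed.

Lemma alpha_zero b : (forall x, alpha N b x = 0) -> b \in Wset N.
Proof.
move=> H; rewrite inE.
have -> : transl b = nu N b by apply: perm_ext => x; rewrite nuE H ap_transl; f2.
exact: nuN.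
Qed.

Lemma alpha_Wb w x : w \in Wset N -> alpha N w x = 0.
Proof.
move=> wW; have := alpha_shift 0 x wW; rewrite add0r => ->.
rewrite /alpha; have := nu_eq (group1 N); rewrite ap1 => <-.
by rewrite ap1; f2.
Qed.

Lemma inv_W : invar Sigma (Wset N).
Proof.
move=> u uS u0 w; rewrite !inE => wN.
case: gN => _ nN _ _ _.
have := affine_conj_transl w (S_affine SylS uS); rewrite u0 addr0 => <-.
by rewrite -mulgA -/(conjg _ _) memJ_norm // (subsetP nN).
Qed.

Lemma alpha_equiv u b y : u \in Sigma -> ap u 0 = 0 ->
  alpha N (ap u b) (ap u y) = ap u (alpha N b y).
Proof.
move=> uS u0.
have uD := S_additive SylS uS u0.
case: gN => _ nN _ _ _.
have cN : (nu N b ^ u)%g \in N by rewrite memJ_norm ?nuN // (subsetP nN).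
have E : nu N (ap u b) = (nu N b ^ u)%g.
  by rewrite (nu_eq cN) /conjg !apM -{1}u0 apK nu0.
rewrite {1}/alpha E /conjg !apM apK nuE !uD; f2.
Qed.

End NA.

End PartD.
Import PartD.

Module PartE.
Set Implicit Arguments. Unset Strict Implicit. Unset Printing Implicit Defensive.
Import GRing.Theory.
Local Open Scope ring_scope.

Ltac f2 := let i := fresh "i" in apply/rowP => i; rewrite ?entryD ?entry0;
  repeat (match goal with |- context [fun_of_matrix ?t ?k i] =>
     case: (F2_cases (fun_of_matrix t k i)) => -> end);
  apply: val_inj; reflexivity.

Section Fix.
Variable n : nat.
Local Notation R := 'rV['F_2]_n.
Local Notation P := {perm V n}.
Variable Sigma : {group P}.
Hypothesis SylS : (2.-Hall(AGL n) Sigma)%g.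

Lemma oppxx (x : R) : - x = x.
Proof. by apply: (addrI x); rewrite addrN addxx. Qed.

Lemma card_R : #|[set: R]| = (2 ^ n)%N.
Proof. by rewrite cardsT card_mx card_Fp // mul1n. Qed.

Lemma fixed_coset (W : {group R}) : invar Sigma W -> ~~ ([set: R] \subset W) ->
  exists f, f \notin W /\ forall u, u \in Sigma -> ap u 0 = 0 -> ap u f + f \in W.
Proof.
move=> iW WT.
pose U := ('C_Sigma[(0 : V n) | 'P])%G.
have UP u : u \in U -> u \in Sigma /\ ap u 0 = 0.
  by case/setIP => uS /astab1P u0; split.
have pU : (2.-group U)%g.
  by apply: pgroupS (pHall_pgroup SylS); apply: subsetIl.
have uW u w : u \in U -> w \in W -> ap u w \in W.
  by move=> /UP [uS u0]; apply: iW.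
have uWeq u : u \in U -> [set ap u w | w in W] = W.
  move=> uU; apply/eqP; rewrite eqEcard; apply/andP; split.
    by apply/subsetP => y /imsetP [w wW ->]; apply: uW.
  by rewrite card_imset //; apply: ap_inj.
have uD u x y : u \in U -> ap u (x + y) = ap u x + ap u y.
  by move=> /UP [uS u0]; apply: (S_additive SylS uS u0).
pose S := rcosets W [set: R].
have coset u x : u \in U -> ('P^*)%act (W :* x)%g u = (W :* ap u x)%g.
  move=> uU; rewrite /= /setact; apply/setP => y; apply/imsetP/idP.
    case=> z; rewrite mem_rcoset => zW ->; rewrite mem_rcoset.
    have -> : (ap u z * (ap u x)^-1)%g = ap u (z * x^-1)%g.
      by change (ap u z - ap u x = ap u (z - x)); rewrite !oppxx uD.
    exact: uW.
  rewrite mem_rcoset => yW.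
  rewrite -(uWeq u uU) in yW; case/imsetP: yW => w wW E.
  exists (w * x)%g; first by rewrite mem_rcoset mulgK.
  move: E; change ((y * (ap u x)^-1)%g) with (y - ap u x); rewrite oppxx => E.
  change (y = ap u (w + x)); rewrite uD // -E; f2.
have acts : [acts U, on S | 'P^*].
  apply/subsetP => u uU; rewrite !inE; apply/subsetP => C /imsetP [x _ ->].
  by rewrite inE rcosetE coset //; apply/imsetP; exists (ap u x); rewrite ?inE ?rcosetE.
have H := pgroup_fix_mod pU acts.
have idx : (2 %| #|S|)%N.
  have d : (#|[set: R] : W|%g %| 2 ^ n)%N by rewrite -card_R; apply: dvdn_indexg.
  have g1 : (1 < #|[set: R] : W|%g)%N by rewrite indexg_gt1.
  case/dvdn_pfactor: d => // m _ E.
  rewrite /S -/(indexg _ _) E; case: m E g1 => [->|m _ _] //.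
  by rewrite expnS dvdn_mulr.
set F := ('Fix_(S | 'P^*)(U))%g in H.
have WF : (W : {set R}) \in F.
  rewrite inE; apply/andP; split.
    by apply/imsetP; exists 0; rewrite ?inE // rcosetE -[0]/(1%g : R) rcoset1.
  apply/afixP => u uU.
  have := coset u 0 uU; rewrite -[0]/(1%g : R) rcoset1 => ->.
  by case: (UP u uU) => _ ->; rewrite rcoset1.
have F2 : (2 %| #|F|)%N by move: idx; rewrite /dvdn -H.
have : (0 < #|F :\ (W : {set R})|)%N.
  move: F2; rewrite (cardsD1 (W : {set R}) F) WF.
  by case: #|F :\ _|.
case/card_gt0P => C /setD1P [CW CF].
move: CF CW; rewrite inE => /andP [/imsetP [f _ ->] /afixP Cfix] CW.
exists f; split.
  by apply: contra CW => fW; rewrite ?rcosetE rcoset_id.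
move=> u uS u0.
have uU : u \in U by rewrite inE uS; apply/astab1P.
have := Cfix u uU; rewrite ?rcosetE coset // => E.
have : ap u f \in (W :* ap u f)%g by rewrite rcoset_refl.
rewrite E mem_rcoset.
by change ((ap u f - f) \in W -> ap u f + f \in W); rewrite oppxx.
Qed.
End Fix.

End PartE.
Import PartE.

Module PartF.
Set Implicit Arguments. Unset Strict Implicit. Unset Printing Implicit Defensive.
Import GRing.Theory.
Local Open Scope ring_scope.

Ltac f2 := let i := fresh "i" in apply/rowP => i; rewrite ?entryD ?entry0;
  repeat (match goal with |- context [fun_of_matrix ?t ?k i] =>
     case: (F2_cases (fun_of_matrix t k i)) => -> end);
  apply: val_inj; reflexivity.

Section Class.
Variable n : nat.
Local Notation R := 'rV['F_2]_n.
Local Notation P := {perm V n}.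
Variable Sigma : {group P}.
Hypothesis SylS : (2.-Hall(AGL n) Sigma)%g.

Lemma gen_u (D : {group R}) (y : R) (lam : R -> 'F_2) : invar Sigma D -> y \in D ->
  (forall a b, lam (a + b) = lam a + lam b) -> (forall d, d \in D -> lam d = 0) ->
  exists u, [/\ u \in Sigma, ap u 0 = 0 & forall x, ap u x = x + lam x *: y].
Proof.
move=> iD yD lD l0.
have [|||u uS uE] := KE SylS iD (eps := fun x => lam x *: y).
- by move=> a b; rewrite lD scalerDl.
- by move=> x; case: (F2_cases (lam x)) => ->; rewrite ?scale0r ?scale1r //; exact: (group1 D).
- by move=> d dD; rewrite l0 ?scale0r.
exists u; split => //.
have l00 : lam 0 = 0 by apply: l0; exact: (group1 D).
by rewrite uE l00 scale0r addr0.
Qed.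

Lemma chain (D1 D2 : {group R}) : invar Sigma D1 -> invar Sigma D2 -> #|D1| = #|D2| ->
  (D1 : {set R}) = D2.
Proof.
move=> i1 i2 c.
apply/eqP; rewrite eqEcard c leqnn andbT; apply/negP => n12.
have n21 : ~~ (D2 \subset D1).
  apply/negP => s; apply: n12.
  by have /eqP -> : (D2 : {set R}) == D1 by rewrite eqEcard s c leqnn.
have n12b : ~~ (D1 \subset D2) by apply/negP.
have [y y1 y2] := subsetPn n12b.
have [x x2 x1] := subsetPn n21.
have [lam [lD l0 lx]] := FL x1.
have [u [uS u0 uE]] := gen_u i1 y1 lD l0.
move: (i2 u uS u0 x x2); rewrite uE lx scale1r => xy.
move/negP: y2; apply.
have := (@groupM _ D2 _ _ xy x2).
by have -> : ((x + y) * x)%g = y by change ((x + y) + x = y); f2.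
Qed.

Lemma uniq_fixed (z z' : R) : z != 0 -> z' != 0 ->
  (forall u, u \in Sigma -> ap u 0 = 0 -> ap u z = z) ->
  (forall u, u \in Sigma -> ap u 0 = 0 -> ap u z' = z') -> z = z'.
Proof.
move=> nz nz' fz fz'; case: (eqVneq z z') => // ne; exfalso.
pose D := ext_group 1%G z.
have mD x : (x \in D) = (x == 0) || (x + z == 0) by rewrite !inE.
have iD : invar Sigma D.
  move=> u uS u0 d; rewrite !mD => /orP [/eqP ->|/eqP dz]; first by rewrite u0 eqxx.
  have -> : d = z by move: dz; rewrite -(addxx z) => /addIr.
  by rewrite fz // addxx eqxx orbT.
have z'D : z' \notin D.
  rewrite mD negb_or nz' /=; apply/negP => /eqP E; move/negP: ne; apply; apply/eqP.
  by move: E; rewrite -(addxx z') => /addrI.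
have [lam [lD l0 lx]] := FL z'D.
have [u [uS u0 uE]] := gen_u iD (ext_a _ _) lD l0.
move: (fz' u uS u0); rewrite uE lx scale1r => E.
by move/negP: nz; apply; apply/eqP; apply: (addrI z'); rewrite addr0.
Qed.

Lemma extE (H : {set R}) a x : (x \in ext H a) = (x \in H) || (x + a \in H).
Proof. by rewrite inE. Qed.

Lemma vanish (W : {set R}) f g (h : R -> R) :
  (forall x, x \in ext (ext W f) g) -> (forall a b, h (a + b) = h a + h b) ->
  (forall w, w \in W -> h w = 0) -> h f = 0 -> h g = 0 -> forall x, h x = 0.
Proof.
move=> cov hD hW hf hg x.
have hs a y : h y = h (y + a) + h a by rewrite hD addxK.
move: (cov x); rewrite !inE => /orP [/orP [xW|xfW]|/orP [xgW|xgfW]].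
- exact: hW.
- by rewrite (hs f) hW // hf addr0.
- by rewrite (hs g) hW // hg addr0.
- by rewrite (hs g) (hs f (x + g)) hW // hf hg !addr0.
Qed.

Lemma cardW (W : {group R}) f g : f \notin W -> g \notin ext W f ->
  (forall x, x \in ext (ext W f) g) -> (4 * #|W| = 2 ^ n)%N.
Proof.
move=> fW gB cov.
have -> : (2 ^ n)%N = #|ext_group (ext_group W f) g|.
  by rewrite -card_R; apply: eq_card => x; rewrite inE cov.
by rewrite card_ext // card_ext // mulnA.
Qed.

Lemma nz_fixed (N : {group P}) (gN : goodN Sigma N) f g :
  f \notin Wset N -> (forall u, u \in Sigma -> ap u 0 = 0 -> ap u f + f \in Wset N) ->
  (forall x, x \in ext (ext (Wset N) f) g) ->
  alpha N f g != 0 /\ forall u, u \in Sigma -> ap u 0 = 0 -> ap u (alpha N f g) = alpha N f g.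
Proof.
move=> fW ffix cov.
have aD := alphaD SylS gN f.
have aff : alpha N f f = 0 by apply: (alpha_alt gN).
have nz : alpha N f g != 0.
  apply/negP => /eqP z; move/negP: fW; apply; apply: (alpha_zero gN).
  apply: (vanish cov aD) => // w wW; exact: (alpha_W gN).
split => // u uS u0.
have uinj : forall a, ap u a = 0 -> a = 0.
  by move=> a; rewrite -{1}u0 => /ap_inj.
have Eq : alpha N f (ap u g) = ap u (alpha N f g).
  rewrite -(alpha_equiv SylS gN f g uS u0).
  have -> : ap u f = f + (ap u f + f) by f2.
  by rewrite (alpha_shift gN) ?ffix.
have contra0 : alpha N f (ap u g) <> 0.
  by rewrite Eq => /uinj /eqP; apply/negP.
rewrite -Eq.
have hs a y : alpha N f y = alpha N f (y + a) + alpha N f a by rewrite aD addxK.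
move: (cov (ap u g)); rewrite !extE => /orP [/orP [xW|xfW]|/orP [xgW|xgfW]].
- by exfalso; apply: contra0; apply: (alpha_W gN).
- by exfalso; apply: contra0; rewrite (hs f) (alpha_W gN) // aff addr0.
- by rewrite (hs g) (alpha_W gN) ?add0r.
- by rewrite (hs g) (hs f (ap u g + g)) (alpha_W gN) // aff !add0r.
Qed.


Lemma g_notin (N : {group P}) (gN : goodN Sigma N) f g : alpha N f g != 0 -> g \notin ext (Wset N) f.
Proof.
move=> nz; rewrite extE negb_or; apply/andP; split; apply/negP => H; move/negP: nz; apply; apply/eqP.
  exact: (alpha_W gN).
have -> : g = (g + f) + f by f2.
by rewrite (alphaD SylS gN) (alpha_W gN) // (alpha_alt gN) addr0.
Qed.

Lemma classify (N : {group P}) (gN : goodN Sigma N) : ~~ ([set: R] \subset Wset N) ->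
  exists f g, [/\ f \notin Wset N,
    (forall u, u \in Sigma -> ap u 0 = 0 -> ap u f + f \in Wset N),
    alpha N f g != 0 & forall x, x \in ext (ext (Wset N) f) g].
Proof.
move=> nW.
have iW : invar Sigma (W_group N) by move=> u uS u0 d dW; apply: (inv_W SylS gN).
have [f [fW ffix]] := fixed_coset SylS iW nW.
have [g gnz] : exists g, alpha N f g != 0.
  apply/existsP; apply: contraR fW => /existsPn H; apply: (alpha_zero gN) => x.
  by apply/eqP; move: (H x); rewrite negbK.
exists f, g; split => //.
move=> x; apply/negPn/negP => xS.
pose B := ext_group (W_group N) f.
pose S' := ext_group B g.
have [lam [lD l0 lx]] := @FL n S' x xS.
have iB : invar Sigma B.
  move=> u uS u0 d; rewrite !extE => /orP [dW|dfW]; apply/orP; first by left; apply: iW.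
  right; have := (@groupM _ (W_group N) _ _ (iW u uS u0 _ dfW) (ffix u uS u0)).
  have -> : (ap u (d + f) * (ap u f + f))%g = ap u d + f.
    by change (ap u (d + f) + (ap u f + f) = ap u d + f); rewrite (S_additive SylS uS u0); f2.
  by [].
have l0B d : d \in B -> lam d = 0 by move=> dB; apply: l0; rewrite /S' extE dB.
have [u [uS u0 uE]] := gen_u iB (ext_a _ _) lD l0B.
have lg : lam g = 0 by apply: l0; apply: ext_a.
have E := alpha_equiv SylS gN x g uS u0.
rewrite !uE lg lx scale0r scale1r addr0 in E.
have law : lam (alpha N x g) = 0.
  by apply: l0; rewrite /S' !extE (alpha_in SylS gN x g).
rewrite law scale0r addr0 (alpha_add SylS gN) in E.
move/negP: gnz; apply; apply/eqP.
by apply: (addrI (alpha N x g)); rewrite addr0.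
Qed.


Lemma cardW_N (N : {group P}) (gN : goodN Sigma N) : ~~ ([set: R] \subset Wset N) ->
  (4 * #|Wset N| = 2 ^ n)%N.
Proof.
move=> nW; have [f [g [fW _ nz cov]]] := classify gN nW.
exact: (@cardW (W_group N) f g fW (g_notin gN nz) cov).
Qed.

Lemma two_N (N1 N2 : {group P}) (g1 : goodN Sigma N1) (g2 : goodN Sigma N2) :
  ~~ ([set: R] \subset Wset N1) -> ~~ ([set: R] \subset Wset N2) -> (N1 : {set P}) = N2.
Proof.
move=> nW1 nW2.
have iW1 : invar Sigma (W_group N1) by move=> u uS u0 d dW; apply: (inv_W SylS g1).
have iW2 : invar Sigma (W_group N2) by move=> u uS u0 d dW; apply: (inv_W SylS g2).
have WW : Wset N1 = Wset N2.
  apply: (chain iW1 iW2) => /=.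
  by apply/eqP; rewrite -(eqn_pmul2l (isT : (0 < 4)%N)) (cardW_N g1 nW1) (cardW_N g2 nW2).
have [f [g [fW ffix nz cov]]] := classify g1 nW1.
have [nz1 fix1] := nz_fixed g1 fW ffix cov.
rewrite WW in fW ffix cov.
have [nz2 fix2] := nz_fixed g2 fW ffix cov.
have zz := uniq_fixed nz1 nz2 fix1 fix2.
rewrite -WW in cov.
have W1 w x : w \in Wset N1 -> alpha N1 x w = 0 by move=> wW; apply: (alpha_W g1).
have W2 w x : w \in Wset N1 -> alpha N2 x w = 0 by move=> wW; apply: (alpha_W g2); rewrite -WW.
have Df x : alpha N1 f x = alpha N2 f x.
  apply/eqP; rewrite -subr_eq0 oppxx; apply/eqP; move: x.
  apply: (vanish cov).
  - by move=> a b; rewrite (alphaD SylS g1) (alphaD SylS g2); f2.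
  - by move=> w wW; rewrite W1 ?W2 // addr0.
  - by rewrite (alpha_alt g1) (alpha_alt g2) addr0.
  - by rewrite zz addxx.
have Dg x : alpha N1 g x = alpha N2 g x.
  apply/eqP; rewrite -subr_eq0 oppxx; apply/eqP; move: x.
  apply: (vanish cov).
  - by move=> a b; rewrite (alphaD SylS g1) (alphaD SylS g2); f2.
  - by move=> w wW; rewrite W1 ?W2 // addr0.
  - by rewrite (alpha_sym g1) (alpha_sym g2) zz addxx.
  - by rewrite (alpha_alt g1) (alpha_alt g2) addr0.
have Dall b x : alpha N1 b x = alpha N2 b x.
  apply/eqP; rewrite -subr_eq0 oppxx; apply/eqP; move: b.
  apply: (vanish cov (h := fun b => alpha N1 b x + alpha N2 b x)).
  - by move=> a b; rewrite (alpha_add SylS g1) (alpha_add SylS g2); f2.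
  - by move=> w wW; rewrite (alpha_Wb g1) // (alpha_Wb g2) ?addr0 // -WW.
  - by rewrite Df addxx.
  - by rewrite Dg addxx.
have Enu b : nu N1 b = nu N2 b by apply: perm_ext => x; rewrite !nuE Dall.
apply/eqP; rewrite eqEsubset; apply/andP; split; apply/subsetP => v vN.
  by rewrite (nu_eq g1 vN) Enu (nuN g2).
by rewrite (nu_eq g2 vN) -Enu (nuN g1).
Qed.

End Class.
End PartF.
Import PartF.

Module PartG.
Set Implicit Arguments. Unset Strict Implicit. Unset Printing Implicit Defensive.
Import GRing.Theory.
Local Open Scope ring_scope.

Ltac f2 := let i := fresh "i" in apply/rowP => i; rewrite ?entryD ?entry0;
  repeat (match goal with |- context [fun_of_matrix ?t ?k i] =>
     case: (F2_cases (fun_of_matrix t k i)) => -> end);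
  apply: val_inj; reflexivity.

Section Final.
Variable n : nat.
Local Notation R := 'rV['F_2]_n.
Local Notation P := {perm V n}.

Lemma T_abelian : abelian (T n).
Proof.
apply/centsP => x /imsetP [v _ ->] y /imsetP [w _ ->].
by rewrite /commute -!translD addrC.
Qed.

Lemma T_exp2 x : x \in T n -> (x * x = 1)%g.
Proof. by case/imsetP => v _ ->; rewrite -translD addxx transl0. Qed.

Lemma T_abelem : (2.-abelem (T n))%g.
Proof.
apply/(abelemP (isT : prime 2)); split; first exact: T_abelian.
by move=> x xT; rewrite expgS expg1 T_exp2.
Qed.

Section Reg.
Variable X : {group P}.
Hypothesis tr : [transitive X, on [set: V n] | 'P].
Hypothesis st : forall x : V n, 'C_X[x | 'P]%g == 1%g.

Lemma reg_ex (b : R) : exists2 v, v \in X & ap v 0 = b.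
Proof.
have : (b : V n) \in orbit 'P X (0 : R) by rewrite (atransP tr) ?inE.
by case/imsetP => v vX ->; exists v.
Qed.

Lemma reg_uniq v v' : v \in X -> v' \in X -> ap v 0 = ap v' 0 -> v = v'.
Proof.
move=> vX v'X E.
have : (v * v'^-1)%g \in 'C_X[(0 : R) | 'P]%g.
  rewrite inE groupM ?groupV //=; apply/astab1P.
  by rewrite /= /aperm permM; change (ap v'^-1%g (ap v 0) = 0); rewrite E apK.
by rewrite (eqP (st _)) inE => /eqP H; apply/eqP; rewrite eq_mulgV1 H.
Qed.
End Reg.

Lemma Tg_reg (g : P) (b : R) : exists2 v, v \in (T n :^ g)%g & ap v 0 = b.
Proof.
exists (transl (ap g^-1%g b + ap g^-1%g 0) ^ g)%g; first by rewrite memJ_conjg; apply/imsetP; exists (ap g^-1%g b + ap g^-1%g 0).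
rewrite /conjg !apM ap_transl.
rewrite (_ : ap g^-1%g b + ap g^-1%g 0 + ap g^-1%g 0 = ap g^-1%g b); last by f2.
by rewrite apKV.
Qed.

Lemma Tg_uniq (g : P) v v' : v \in (T n :^ g)%g -> v' \in (T n :^ g)%g ->
  ap v 0 = ap v' 0 -> v = v'.
Proof.
move=> /imsetP [x /imsetP [a _ ->] ->] /imsetP [y /imsetP [c _ ->] ->].
rewrite /conjg !apM !ap_transl => /ap_inj /addIr ->.
by [].
Qed.

End Final.

Section Main.
Variable n : nat.
Local Notation R := 'rV['F_2]_n.
Local Notation P := {perm V n}.
Variable Sigma : {group P}.
Hypothesis SylS : (2.-Hall(AGL n) Sigma)%g.

Lemma good_Tg (g : P) : (T n :^ g \subset Sigma)%g -> (T n :^ g <| Sigma)%g ->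
  goodN Sigma (T n :^ g)%g.
Proof.
move=> sub /andP [_ nN]; split => //.
- by rewrite abelianJ T_abelian.
- by move=> v /imsetP [x xT ->]; rewrite -conjMg T_exp2 ?conj1g.
- split; [exact: Tg_reg | exact: Tg_uniq].
Qed.

Lemma good_X (X : {set P}) : isTSigma Sigma X -> exists2 XG : {group P}, gval XG = X & goodN Sigma XG.
Proof.
rewrite /isTSigma /regular_subgroup => /and4P [/andP [/andP [gX tr] st] ab nX _].
exists (Group gX) => //=.
have st' : forall x : V n, 'C_(Group gX)[x | 'P]%g == 1%g by move=> x; apply: (forallP st x).
case/andP: nX => sX nX; split => //.
- exact: abelem_abelian ab.
- move=> v vX; have [_ e2] := elimT (abelemP (isT : prime 2)) (ab : 2.-abelem (Group gX))%g.
  by rewrite -(e2 v vX) expgS expg1.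
- split; [exact: (@reg_ex _ (Group gX) tr) | exact: (@reg_uniq _ (Group gX) st')].
Qed.

Lemma capTW (N : {group P}) : #|T n :&: N| = #|Wset N|.
Proof.
have -> : T n :&: N = [set transl v | v in Wset N].
  apply/setP => x; rewrite inE; apply/andP/imsetP.
    by case=> /imsetP [v _ ->] vN; exists v; rewrite ?inE.
  by case=> v; rewrite inE => vN ->; split => //; apply/imsetP; exists v.
by rewrite card_imset //; apply: transl_inj.
Qed.

Lemma full_T (N : {group P}) : (#|N| <= 2 ^ n)%N -> [set: R] \subset Wset N -> (N : {set P}) = T n.
Proof.
move=> cN sW.
have TN : T n \subset N by apply/subsetP => x /imsetP [v _ ->]; move: (subsetP sW v); rewrite !inE; apply.
by apply/eqP; rewrite eq_sym eqEcard TN card_T.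
Qed.


Lemma card_good (N : {group P}) : goodN Sigma N -> (#|N| <= 2 ^ n)%N.
Proof.
case=> _ _ _ _ [_ uq].
have inj : {in N &, injective (fun v : P => ap v 0)} by move=> v v' vN v'N; apply: uq.
rewrite -card_R -(card_in_imset inj); apply: subset_leq_card; apply: subsetT.
Qed.

End Main.

Lemma exp_sub2 n : (2 < n)%N -> (2 ^ n = 4 * 2 ^ (n - 2))%N.
Proof. by move=> h; rewrite -[4%N]/(2 ^ 2)%N -expnD subnKC // ltnW. Qed.

Theorem main13 (n : nat) (g : {perm V n}) (Sigma : {group {perm V n}}) :
  (2 < n)%N ->
  Sigma \in 'Syl_2(AGL n)%g ->
  (T n :^ g \subset Sigma)%g ->
  ((T n :^ g <| Sigma)%g <-> (T n :^ g)%g \in [set T n; @T_Sigma n Sigma]).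
Proof.
move=> n2 SylIn sub.
have SylS : (2.-Hall(AGL n) Sigma)%g by move: SylIn; rewrite inE.
split.
  move=> nTg.
  have gT := good_Tg sub nTg.
  case: (eqVneq (T n :^ g)%g (T n)) => [->|ne]; first by rewrite !inE eqxx.
  pose N := (T_group n :^ g)%G.
  have gN : goodN Sigma N := gT.
  have nW : ~~ ([set: 'rV['F_2]_n] \subset Wset N).
    apply/negP => s; move/eqP: ne; apply; apply: (full_T (N:=N)) => //.
    by rewrite /= cardJg card_T.
  have c4 := cardW_N SylS gN nW.
  have cW : #|Wset N| = (2 ^ (n - 2))%N.
    by apply/eqP; rewrite -(eqn_pmul2l (isT : (0 < 4)%N)) c4 exp_sub2.
  have isT : isTSigma Sigma (T n :^ g)%g.
    rewrite /isTSigma /regular_subgroup; apply/and4P; split.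
    - apply/andP; split; first (apply/andP; split).
      + exact: (valP N).
      + apply/imsetP; exists (0 : V n); rewrite ?inE //; apply/setP => b; rewrite inE.
        apply/esym/imsetP; have [v vN vb] := Tg_reg g b; exists v => //.
      + apply/forallP => x; rewrite eqEsubset sub1G andbT; apply/subsetP => v.
        case/setIP => /imsetP [y /imsetP [a _ ->] ->] /astab1P.
        rewrite /= /aperm -/(ap _ x) /conjg !apM ap_transl => E.
        have a0 : a = 0.
          move/(congr1 (ap g^-1%g)): E; rewrite apK => E.
          by apply: (addIr (ap g^-1%g x)); rewrite add0r.
        by rewrite a0 transl0 mul1g mulVg inE.
    - by rewrite abelemJ T_abelem.
    - exact: nTg.
    - by have := capTW N; rewrite /= => ->; rewrite cW.
  rewrite /T_Sigma; case: pickP => [X HX|H0]; last by move: (H0 (T n :^ g)%g); rewrite isT.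
  have [XG XE gX] := good_X HX.
  have nWX : ~~ ([set: 'rV['F_2]_n] \subset Wset XG).
    apply/negP => s; have XT := full_T (card_good gX) s.
    move: HX; rewrite /isTSigma -XE XT setIid card_T => /and4P [_ _ _ /eqP].
    move/eqP; rewrite eqn_exp2l // => /eqP E.
    by move: E n2; clear; lia.
  have := two_N SylS gN gX nW nWX; rewrite /= XE => ->.
  by rewrite !inE eqxx orbT.
rewrite !inE => /orP [/eqP E|/eqP E].
  by rewrite E /normal (T_S SylS) (subset_trans (S_AGL SylS) (AGL_norm_T n)).
move: E; rewrite /T_Sigma; case: pickP => [X HX ->|_ E].
  by case/and4P: HX.
by have := group1 (T_group n :^ g)%G; rewrite /= E inE.
Qed.

End PartG.
Import PartG.

Local Open Scope group_scope.

Theorem mainTheorem13 (n : nat) (g : {perm V n}) (Sigma : {group {perm V n}}) :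
  (2 < n)%N ->
  Sigma \in 'Syl_2(AGL n) ->
  T n :^ g \subset Sigma ->
  (T n :^ g <| Sigma <-> T n :^ g \in [set T n; @T_Sigma n Sigma]).
Proof. exact: main13. Qed.
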